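(* Let $G=(V,E)$ be a graph, let $D\subseteq V$, and let $P$ be a path in $G$ that is a shortest path (between its endpoints) in the induced subgraph $G[P\cup D]$. Suppose the robber is confined to $D$. Then five cops have a strategy to guard $N[P]$, after a finite number of initial moves.
   Context: Game of cops and robber on a finite graph: cops are placed, then the robber; players alternate starting with cops; each piece stays or moves to an adjacent vertex; the robber is captured when a cop occupies his vertex. Given a strategy of the cops, the robber cannot safely move to a vertex $v$ if the strategy ensures he is immediately captured after moving to $v$; the strategy guards a set $P$ of vertices if the robber cannot safely move to any vertex of $P$; the robber is confined to $D$ if the strategy ensures he is immediately captured upon moving to any vertex of $V\setminus D$. $N[X]=\bigcup_{v\in X}(\{v\}\cup\{u: uv\in E\})$ is the closed neighborhood of a vertex set $X$. *)

(* Defs.v *)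
From mathcomp Require Import all_boot.
Set Implicit Arguments. Unset Strict Implicit. Unset Printing Implicit Defensive.

(* A finite simple graph: vertex type T : finType, adjacency e : rel T,
   assumed symmetric and irreflexive in the theorem. *)

Definition closed_nbhd (T : finType) (e : rel T) (X : {set T}) : {set T} :=
  [set v | [exists x in X, (v == x) || e x v]].

Definition step (T : finType) (e : rel T) (u v : T) : bool := (u == v) || e u v.

Definition is_path (T : finType) (e : rel T) (s : seq T) : Prop :=
  s != [::] /\ sorted e s /\ uniq s.

Definition induced (T : finType) (e : rel T) (S : {set T}) : rel T :=
  [rel u v | [&& e u v, u \in S & v \in S]].

Definition shortest_in (T : finType) (e : rel T) (S : {set T})
    (x0 : T) (p : seq T) : Prop :=
  [/\ x0 \in S, all (mem S) p &
    forall q : seq T, path (induced e S) x0 q -> last x0 q = last x0 p ->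
      size p <= size q].

(* A strategy for k cops: from the history [:: r0; r1; ...; rn] of robber
   positions so far, it gives the cops' positions.  s [::] is the initial
   placement; s (rcons h r) is the cops' position after responding to the
   robber moving to r. *)
Definition strategy (T : finType) (k : nat) := seq T -> {ffun 'I_k -> T}.

Definition valid_strategy (T : finType) (e : rel T) (k : nat)
    (s : strategy T k) : Prop :=
  forall (h : seq T) (r : T) (i : 'I_k), step e (s h i) (s (rcons h r) i).

Definition robber_walk (T : finType) (e : rel T) (D : {set T}) (h : seq T) : bool :=
  all (mem D) h && sorted (step e) h.

(* The robber, after history h, moves to (or is placed on / stays at) r and is
   immediately captured: either he lands on a cop, or a cop moves onto him in
   the cops' response. *)
Definition captured_after (T : finType) (k : nat) (s : strategy T k)
    (h : seq T) (r : T) : bool :=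
  [exists i, (s h i == r) || (s (rcons h r) i == r)].

Definition caught_during (T : finType) (k : nat) (s : strategy T k)
    (h : seq T) : Prop :=
  exists h1 r h2, h = h1 ++ r :: h2 /\ captured_after s h1 r.

Definition eventually_guards (T : finType) (e : rel T) (D X : {set T})
    (k : nat) (s : strategy T k) : Prop :=
  exists N : nat, forall (h : seq T) (r : T),
    robber_walk e D (rcons h r) -> N <= size h -> ~ caught_during s h ->
    r \in X -> captured_after s h r.

(* Main.v *)
Require Import Defs.
From mathcomp Require Import all_boot.
From mathcomp Require Import zify.
From Stdlib Require Import Classical.

Set Implicit Arguments. Unset Strict Implicit. Unset Printing Implicit Defensive.

Definition toward (c t : nat) : nat :=
  if c < t then c.+1 else if t < c then c.-1 else c.

Definition trans (T : finType) (e : rel T) (xx : nat -> T) (tg : T -> nat)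
  (st : nat * option T) (r : T) : nat * option T :=
  match st.2 with
  | Some _ => (st.1, None)
  | None => if step e (xx st.1) r then (st.1, Some r)
            else (toward st.1 (tg r), None)
  end.

Definition stt (T : finType) (e : rel T) (xx : nat -> T) (tg : nat -> T -> nat)
  (k : nat) (h : seq T) := foldl (trans e xx (tg k)) (0, None) h.

Definition posn (T : finType) (xx : nat -> T) (st : nat * option T) : T :=
  if st.2 is Some v then v else xx st.1.

Definition strat (T : finType) (e : rel T) (xx : nat -> T) (tg : nat -> T -> nat)
  : strategy T 5 := fun h => [ffun k : 'I_5 => posn xx (stt e xx tg k h)].

Lemma valid_strat (T : finType) (e : rel T) (xx : nat -> T) (tg : nat -> T -> nat)
  (n : nat) (e_sym : symmetric e)
  (edg : forall c, c < n -> e (xx c) (xx c.+1))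
  (tgb : forall k r, tg k r <= n) :
  valid_strategy e (strat e xx tg).
Proof.
have inv : forall k h, let st := stt e xx tg k h in
   st.1 <= n /\ (forall v, st.2 = Some v -> step e (xx st.1) v).
  move=> k h; elim/last_ind: h => [|h r IH] /=; first by split.
  rewrite /stt foldl_rcons -/(stt e xx tg k h).
  case: (stt e xx tg k h) IH => c [v|] /= [Hc Hv]; rewrite /trans /=.
    by split.
  case: ifP => Hs /=; first by split => // v [<-].
  split => //; rewrite /toward; move: (tgb k r) => ?.
  case: ifP => ?; first lia. case: ifP => ?; lia.
move=> h r i; rewrite !ffunE /stt foldl_rcons -/(stt e xx tg i h).
move: (inv i h) => /=.
case: (stt e xx tg i h) => c [v|] /= [Hc Hv]; rewrite /trans /posn /=.
  move: (Hv v erefl); rewrite /step => /orP [/eqP->|H]; first by rewrite eqxx.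
  by rewrite e_sym H orbT.
case: ifP => Hs //=.
rewrite /toward; move: (tgb i r) => Htg.
case: ifP => H1.
  by rewrite /step edg ?orbT //; lia.
case: ifP => H2; last by rewrite /step eqxx.
have Hc0 : 0 < c by lia.
have := edg c.-1 (ltac:(lia)); rewrite prednK // => H.
by rewrite /step e_sym H orbT.
Qed.

Lemma pure_strat (T : finType) (e : rel T) (xx : nat -> T) (tg : nat -> T -> nat)
  (h : seq T) :
  ~ caught_during (strat e xx tg) h ->
  forall k : 'I_5, stt e xx tg k h = (foldl toward 0 (map (tg k) h), None).
Proof.
elim/last_ind: h => [|h r IH] Hnc k //.
have Hnc' : ~ caught_during (strat e xx tg) h.
  move=> [h1 [r1 [h2 [E C]]]]; apply: Hnc; exists h1, r1, (rcons h2 r).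
  by rewrite E rcons_cat.
have Hnca : ~~ captured_after (strat e xx tg) h r.
  apply/negP => C; apply: Hnc; exists h, r, [::]; by rewrite cats1.
rewrite /stt foldl_rcons -/(stt e xx tg k h) IH // map_rcons foldl_rcons.
rewrite /trans /=; case: ifP => // Hs.
exfalso; move/negP: Hnca; apply; apply/existsP; exists k; apply/orP; right.
by rewrite ffunE /stt foldl_rcons -/(stt e xx tg k h) IH // /trans /= Hs.
Qed.

Lemma cap_strat (T : finType) (e : rel T) (xx : nat -> T) (tg : nat -> T -> nat)
  (h : seq T) (r : T) (k : 'I_5) c :
  stt e xx tg k h = (c, None) -> step e (xx c) r ->
  captured_after (strat e xx tg) h r.
Proof.
move=> E Hs; apply/existsP; exists k; apply/orP; right.
by rewrite ffunE /stt foldl_rcons -/(stt e xx tg k h) E /trans /= Hs.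
Qed.

Definition lip (a b : nat) : bool := (a <= b.+1) && (b <= a.+1).

Lemma conv_gen (u : seq nat) : forall a c m, path lip a u -> c <= a ->
  (c = a \/ m <= c) ->
  foldl toward c u <= last a u /\
  (foldl toward c u = last a u \/ m + size u <= foldl toward c u).
Proof.
elim: u => [|b u IH] a c m /=; first by move=> _ ? [?|?]; split => //; lia.
move=> /andP [/andP [H1 H2] Hp] Hca Hor.
have := IH b (toward c b) m.+1 Hp.
rewrite addSnnS; apply; rewrite /toward.
  case: ifP => ?; first lia. case: ifP => ?; lia.
case: Hor => Hor.
  case: ifP => ?; first lia. case: ifP => ?; lia.
case: ifP => ?; first lia. case: ifP => ?; lia.
Qed.

Lemma ex_min_P (P : nat -> Prop) : (exists k, P k) ->
  exists k, P k /\ forall j, P j -> k <= j.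
Proof.
move=> [k Pk].
suff : forall n, (exists k, k <= n /\ P k) -> exists k, P k /\ forall j, P j -> k <= j.
  by apply; exists k.
elim => [|n IH].
  move=> [k0 [Hk Pk0]]; exists 0; split; last by [].
  by have -> : 0 = k0 by lia.
move=> [k0 [Hk Pk0]].
case: (classic (exists k, k <= n /\ P k)) => Hex; first exact: IH.
exists k0; split => // j Pj.
case: (leqP k0 j) => // Hj; exfalso; apply: Hex; exists j; split => //; lia.
Qed.

Lemma arith_k (i j dr n : nat) : i <= n -> dr <= i.+1 -> i <= dr.+1 ->
  dr <= j.+1 -> j <= dr.+1 -> i + 2 - j < 5 /\ minn n (j + (i + 2 - j) - 2) = i.
Proof. move=> *; split; lia. Qed.

Lemma lip_min (n k a b : nat) : b <= a.+1 -> a <= b.+1 ->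
  lip (minn n (a + k - 2)) (minn n (b + k - 2)).
Proof. rewrite /lip => *; apply/andP; split; lia. Qed.

Lemma conv_final (u : seq nat) (a n : nat) : path lip a u -> last a u <= n ->
  n <= size u -> foldl toward (toward 0 a) u = last a u.
Proof.
move=> Hp Hl Hs.
have [H0 H1] : toward 0 a <= a /\ (toward 0 a = a \/ 1 <= toward 0 a).
  rewrite /toward ltn0; case: (ltnP 0 a) => ?; split; lia.
have [? [?|?]] := @conv_gen u a (toward 0 a) 1 Hp H0 H1 => //; lia.
Qed.

Theorem lemma7 (T : finType) (e : rel T)
    (e_sym : symmetric e) (e_irr : irreflexive e)
    (D : {set T}) (x0 : T) (p : seq T)
    (P_path : is_path e (x0 :: p))
    (P_shortest : shortest_in e ([set x | x \in x0 :: p] :|: D) x0 p) :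
  exists s : strategy T 5,
    valid_strategy e s /\
    eventually_guards e D (closed_nbhd e [set x | x \in x0 :: p]) s.
Proof.
set S := [set x | x \in x0 :: p] :|: D.
set Hs := induced e S.
set n := size p.
case: P_path => _ [Hpe _].
case: P_shortest => Hx0S HpS Hmin.
have pH : path Hs x0 p.
  apply: (sub_in_path (P := mem S)) Hpe => //; last by apply/andP; split.
  by move=> u v Hu Hv Huv; rewrite /Hs /induced /= Huv Hu Hv.
pose W v k := exists q, path Hs x0 q /\ last x0 q = v /\ size q = k.
have [d Hd] : exists d : T -> nat, forall v, connect Hs x0 v ->
    W v (d v) /\ forall k, W v k -> d v <= k.
  apply: (@fin_all_exists T (fun _ => nat) (fun v k => connect Hs x0 v ->
    W v k /\ forall j, W v j -> k <= j)) => v.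
  case: (boolP (connect Hs x0 v)) => Hc; last by exists 0.
  have [k [Wk Mk]] : exists k, W v k /\ forall j, W v j -> k <= j.
    apply: ex_min_P; move/connectP: Hc => [q Hq ->].
    by exists (size q), q.
  by exists k.
have F1 : forall u v, connect Hs x0 u -> u \in S -> v \in S -> e u v ->
    connect Hs x0 v /\ d v <= (d u).+1.
  move=> u v Hu HuS HvS Huv.
  have Huv' : Hs u v by rewrite /Hs /induced /= Huv HuS HvS.
  have Hv : connect Hs x0 v by apply: connect_trans Hu (connect1 Huv').
  split => //; apply: (Hd v Hv).2.
  case: (Hd u Hu) => [[q [Hq [Hl Hsz]]] _].
  exists (rcons q v); rewrite rcons_path Hq Hl last_rcons size_rcons Hsz.
  by split.
pose xx i := last x0 (take i p).
have xxnth : forall i, i <= n -> xx i = nth x0 (x0 :: p) i.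
  move=> i Hi; rewrite /xx (last_nth x0) size_takel //.
  case: i Hi => [|i] Hi //=; rewrite nth_take //.
have xxS : forall i, i <= n -> xx i \in S.
  move=> i Hi; rewrite xxnth // in_setU in_set mem_nth //= /n; lia.
have F2 : forall i, i <= n -> connect Hs x0 (xx i) /\ d (xx i) = i.
  move=> i Hi.
  have pH' := pH; rewrite -(cat_take_drop i p) cat_path in pH'.
  case/andP: pH' => pT pD.
  have Hc : connect Hs x0 (xx i) by apply/connectP; exists (take i p).
  split => //.
  have Wi : W (xx i) i by exists (take i p); rewrite size_takel.
  have Hle := (Hd _ Hc).2 _ Wi.
  have [[q [Hq [Hl Hsz]]] _] := Hd _ Hc.
  have := Hmin (q ++ drop i p).
  rewrite cat_path Hq Hl pD last_cat Hl -last_cat cat_take_drop size_cat size_drop Hsz.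
  move=> H; have := H erefl erefl; rewrite -/n; lia.
have edg : forall c, c < n -> e (xx c) (xx c.+1).
  move=> c Hc; have Hp2 := Hpe.
  rewrite /= -(cat_take_drop c.+1 p) cat_path (take_nth x0) // rcons_path in Hp2.
  rewrite /xx (take_nth x0) // last_rcons.
  by case/andP: Hp2 => /andP [_ H] _.
pose tg (k : nat) (r : T) := minn n (d r + k - 2).
exists (strat e xx tg); split.
  apply: (@valid_strat _ _ _ _ n) => // k r; rewrite /tg; lia.
exists n.+1 => h r /andP [Hall Hsort] Hsz Hnc HrN.
have [i [Hi Hri]] : exists i, i <= n /\ step e (xx i) r.
  move: HrN; rewrite inE => /existsP [y /andP [Hy Hry]].
  rewrite in_set in Hy.
  have Hix : index y (x0 :: p) <= n by have := index_mem y (x0::p); rewrite Hy /= /n; lia.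
  exists (index y (x0 :: p)); split; first exact: Hix.
  rewrite xxnth //.
  rewrite nth_index // /step.
  case/orP: Hry => [/eqP->|->]; by rewrite ?eqxx ?orbT.
case: h Hall Hsort Hsz Hnc => [|a u] //= Hall Hsort Hsz Hnc.
have HrD : r \in D.
  by move: Hall => /andP [_]; rewrite all_rcons => /andP [].
have HrS : r \in S by rewrite !inE HrD orbT.
have [Hci Hdi] := F2 i Hi.
have Hsym : forall u v, step e u v -> step e v u.
  by move=> u' v'; rewrite /step eq_sym e_sym.
have [Hcr Hdr] : connect Hs x0 r /\ d r <= i.+1 /\ i <= (d r).+1.
  case/orP: Hri => [/eqP <-|Her]; first by rewrite Hdi !leqnSn; split.
  have [Hcr Hdr] := F1 _ _ Hci (xxS i Hi) HrS Her.
  split => //; rewrite Hdi in Hdr; split => //.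
  have := (F1 _ _ Hcr HrS (xxS i Hi) ltac:(by rewrite e_sym)).2.
  by rewrite Hdi.
have allD : all (mem D) (a :: u).
  by move: Hall => /andP [Ha]; rewrite all_rcons => /andP [_ Hu]; rewrite /= Ha Hu.
have allS : forall y, y \in a :: u -> y \in S.
  move=> y Hy; move/allP: allD => /(_ y Hy) /= HyD; by rewrite !inE HyD orbT.
move: Hsort; rewrite rcons_path => /andP [Hpu Hlr].
have allR : forall (b : T) (w : seq T), path (step e) b w ->
    (forall y, y \in b :: w -> y \in S) -> connect Hs x0 (last b w) ->
    forall y, y \in b :: w -> connect Hs x0 y.
  move=> b w; elim: w b => [|c w IH] b /=.
    by move=> _ _ Hb y; rewrite inE => /eqP ->.
  move=> /andP [Hbc Hp] HS Hl.
  have Hc : forall y, y \in c :: w -> connect Hs x0 y.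
    apply: IH => // y Hy; apply: HS; by rewrite inE Hy orbT.
  move=> y; rewrite inE => /orP [/eqP ->|Hy]; last exact: Hc.
  have Hcc := Hc c (mem_head _ _).
  case/orP: Hbc => [/eqP ->//|Hbc].
  apply: (proj1 (F1 c b Hcc _ _ _)).
  - by apply: HS; rewrite !inE eqxx orbT.
  - by apply: HS; rewrite mem_head.
  - by rewrite e_sym.
have Hcl : connect Hs x0 (last a u).
  case/orP: Hlr => [/eqP ->//|Her].
  apply: (proj1 (F1 r _ Hcr HrS _ _)); first by apply: allS; exact: mem_last.
  by rewrite e_sym.
have Rall := allR a u Hpu allS Hcl.
have lipd : forall y z, y \in a :: u -> z \in a :: u -> step e y z ->
    d z <= (d y).+1 /\ d y <= (d z).+1.
  move=> y z Hy Hz; case/orP => [/eqP ->|Hyz]; first by rewrite !leqnSn.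
  split; first exact: (F1 _ _ (Rall y Hy) (allS y Hy) (allS z Hz) Hyz).2.
  by apply: (proj2 (F1 _ _ (Rall z Hz) (allS z Hz) (allS y Hy) _)); rewrite e_sym.
have [Hj1 Hj2] : d r <= (d (last a u)).+1 /\ d (last a u) <= (d r).+1.
  case/orP: Hlr => [/eqP ->|Her]; first by rewrite !leqnSn.
  split; first exact: (F1 _ _ Hcl (allS _ (mem_last _ _)) HrS Her).2.
  exact: (F1 _ _ Hcr HrS (allS _ (mem_last _ _)) ltac:(by rewrite e_sym)).2.
have [Hk Htk0] := arith_k Hi Hdr.1 Hdr.2 Hj1 Hj2.
pose k := Ordinal Hk.
have Htk : tg k (last a u) = i by exact: Htk0.
have Hpure := pure_strat Hnc k.
have Hconv : foldl toward 0 (map (tg k) (a :: u)) = i.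
  apply: etrans Htk; rewrite /= -(last_map (tg k)).
  have Hpl : path lip (tg k a) (map (tg k) u).
    rewrite path_map.
    apply: (sub_in_path (P := mem (a :: u))) Hpu; last by apply/allP.
    move=> y z Hy Hz Hyz; have [H1 H2] := lipd y z Hy Hz Hyz.
    exact: lip_min.
  apply: conv_final Hpl _ _; first by rewrite last_map /tg; exact: geq_minl.
  by rewrite size_map; move: Hsz; rewrite ltnS.
apply: (cap_strat (k := k) (c := i)); last by [].
by rewrite Hpure Hconv.
Qed.
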